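(* Let $(A\to M,\rho,[\cdot,\cdot])$ be a Lie algebroid and $\nabla\colon\mathfrak X(M)\times\Gamma(A)\to\Gamma(A)$ a linear connection. Consider the 2-representation $(\nabla^{\rm bas},\nabla^{\rm bas},R^{\rm bas}_\nabla)$ of the Lie algebroid $A$ on the complex $\rho\colon A\to TM$, and the 2-representation $(\nabla,\nabla,R_\nabla)$ of the Lie algebroid $TM$ (anchor $\mathrm{Id}_{TM}$, Lie bracket of vector fields) on the complex $\mathrm{Id}_A\colon A\to A$. These two 2-representations form a matched pair, where in the definition of matched pair the first Lie algebroid is $A$, the second is $TM$, the common complex term is $C:=A$, $\partial_B:=\rho\colon A\to TM$ and $\partial_A:=\mathrm{Id}_A$.
   Context: $R_\nabla(X,Y)=\nabla_X\nabla_Y-\nabla_Y\nabla_X-\nabla_{[X,Y]}$. The basic connections are $\nabla^{\rm bas}_aX=[\rho(a),X]+\rho(\nabla_Xa)$ on $TM$ and $\nabla^{\rm bas}_{a_1}a_2=[a_1,a_2]+\nabla_{\rho(a_2)}a_1$ on $A$, and $R^{\rm bas}_\nabla\in\Omega^2(A,\mathrm{Hom}(TM,A))$ is $R^{\rm bas}_\nabla(a_1,a_2)X=-\nabla_X[a_1,a_2]+[\nabla_Xa_1,a_2]+[a_1,\nabla_Xa_2]+\nabla_{\nabla^{\rm bas}_{a_2}X}a_1-\nabla_{\nabla^{\rm bas}_{a_1}X}a_2$. Matched pair: Lie algebroids $A,B$ over $M$, a 2-representation $(\nabla^{AB},\nabla^{AC},R_A)$ of $A$ on $\partial_B\colon C\to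 B$ ($R_A\in\Omega^2(A,\mathrm{Hom}(B,C))$) and $(\nabla^{BA},\nabla^{BC},R_B)$ of $B$ on $\partial_A\colon C\to A$ ($R_B\in\Omega^2(B,\mathrm{Hom}(A,C))$). Writing $\nabla$ for all four connections, they form a matched pair if for all $a,a_i\in\Gamma(A)$, $b,b_i\in\Gamma(B)$, $c,c_i\in\Gamma(C)$: (M1) $\rho_A\partial_A=\rho_B\partial_B$; (M2) $\nabla_{\partial_Ac_1}c_2-\nabla_{\partial_Bc_2}c_1=-\nabla_{\partial_Ac_2}c_1+\nabla_{\partial_Bc_1}c_2$; (M3) $[a,\partial_Ac]=\partial_A(\nabla_ac)-\nabla_{\partial_Bc}a$; (M4) $[b,\partial_Bc]=\partial_B(\nabla_bc)-\nabla_{\partial_Ac}b$; (M5) $[\rho_A(a),\rho_B(b)]=\rho_B(\nabla_ab)-\rho_A(\nabla_ba)$; (M6) $\nabla_b\nabla_ac-\nabla_a\nabla_bc-\nabla_{\nabla_ba}c+\nabla_{\nabla_ab}c=R_B(b,\partial_Bc)a-R_A(a,\partial_Ac)b$; (M7) $\partial_A(R_A(a_1,a_2)b)=-\nabla_b[a_1,a_2]+[\nabla_ba_1,a_2]+[a_1,\nabla_ba_2]+\nabla_{\nabla_{a_2}b}a_1-\nabla_{\nabla_{a_1}b}a_2$; (M8) $\partial_B(R_B(b_1,b_2)a)=-\nabla_a[b_1,b_2]+[\nabla_ab_1,b_2]+[b_1,\nabla_ab_2]+\nabla_{\nabla_{b_2}a}b_1-\nabla_{\nabla_{b_1}a}b_2$;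 (M9) $\mathrm d_{\nabla^A}R_B=\mathrm d_{\nabla^B}R_A$, where $R_B$ is viewed in $\Omega^1(A,\wedge^2B^*\otimes C)$ via $a\mapsto((b_1,b_2)\mapsto R_B(b_1,b_2)a)$, $R_A$ in $\Omega^1(B,\wedge^2A^*\otimes C)$ likewise, $\nabla^A,\nabla^B$ the induced connections on $\wedge^2B^*\otimes C$, $\wedge^2A^*\otimes C$, and $\Omega^2(A,\wedge^2B^*\otimes C)\cong\Omega^2(B,\wedge^2A^*\otimes C)$ via $\omega(a_1,a_2)(b_1,b_2)=\omega'(b_1,b_2)(a_1,a_2)$. *)

(* Defs.v *)
(* Algebraic (Lie–Rinehart) rendering of Lie algebroids:
   smooth functions  C^oo(M)  ~~> a commutative ring  R,
   vector fields  X(M)        ~~> an R-module  X  with bracket  brX  and an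
                                  action  act : X -> R -> R  by derivations,
   sections  Gamma(A)         ~~> an R-module  LA  with bracket  brA  and
                                  anchor  rho : LA -> X.
   Vector-bundle valued forms are represented by the multi-argument maps on
   sections they induce. *)
From HB Require Import structures.
From mathcomp Require Import all_boot all_order all_algebra.
Set Implicit Arguments.
Unset Strict Implicit.
Unset Printing Implicit Defensive.
Import Order.TTheory GRing.Theory Num.Theory.
Local Open Scope ring_scope.

Definition lie_bracket (L : zmodType) (br : L -> L -> L) : Prop :=
  ( (forall x y z, br (x + y) z = br x z + br y z) /\
      (forall x y z, br x (y + z) = br x y + br x z) /\
      (forall x, br x x = 0)  /\
      (forall x y z, br x (br y z) + br y (br z x) + br z (br x y) = 0)).

Definition tangent_algebroid (R : comPzRingType) (X : lmodType R)
    (brX : X -> X -> X) (act : X -> R -> R) : Prop :=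
  ( lie_bracket brX /\
      (forall (x y : X) g, act (x + y) g = act x g + act y g) /\
      (forall f (x : X) g, act (f *: x) g = f * act x g) /\
      (forall (x : X) f g, act x (f + g) = act x f + act x g) /\
      (forall (x : X) f g, act x (f * g) = act x f * g + f * act x g) /\
      (forall (x y : X) f, act (brX x y) f = act x (act y f) - act y (act x f))  /\
      (forall (x y : X) f, brX x (f *: y) = f *: brX x y + act x f *: y)).

Definition lie_algebroid (R : comPzRingType) (X : lmodType R)
    (brX : X -> X -> X) (act : X -> R -> R)
    (LA : lmodType R) (brA : LA -> LA -> LA) (rho : LA -> X) : Prop :=
  ( lie_bracket brA /\
      (forall a b : LA, rho (a + b) = rho a + rho b) /\
      (forall f (a : LA), rho (f *: a) = f *: rho a) /\
      (forall a b : LA, rho (brA a b) = brX (rho a) (rho b))  /\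
      (forall (a b : LA) f, brA a (f *: b) = f *: brA a b + act (rho a) f *: b)).

Definition linear_connection (R : comPzRingType) (X : lmodType R)
    (act : X -> R -> R) (LA : lmodType R) (nab : X -> LA -> LA) : Prop :=
  ( (forall (x y : X) a, nab (x + y) a = nab x a + nab y a) /\
      (forall f (x : X) a, nab (f *: x) a = f *: nab x a) /\
      (forall (x : X) (a b : LA), nab x (a + b) = nab x a + nab x b)  /\
      (forall (x : X) f (a : LA), nab x (f *: a) = f *: nab x a + act x f *: a)).

Definition curv (X LA : zmodType) (brX : X -> X -> X) (nab : X -> LA -> LA)
    (x y : X) (a : LA) : LA :=
  nab x (nab y a) - nab y (nab x a) - nab (brX x y) a.

Definition bas_TM (X LA : zmodType) (brX : X -> X -> X) (rho : LA -> X)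
    (nab : X -> LA -> LA) (a : LA) (x : X) : X :=
  brX (rho a) x + rho (nab x a).

Definition bas_A (X LA : zmodType) (brA : LA -> LA -> LA) (rho : LA -> X)
    (nab : X -> LA -> LA) (a1 a2 : LA) : LA :=
  brA a1 a2 + nab (rho a2) a1.

Definition Rbas (X LA : zmodType) (brX : X -> X -> X) (brA : LA -> LA -> LA)
    (rho : LA -> X) (nab : X -> LA -> LA) (a1 a2 : LA) (x : X) : LA :=
  - nab x (brA a1 a2) + brA (nab x a1) a2 + brA a1 (nab x a2)
  + nab (bas_TM brX rho nab a2 x) a1 - nab (bas_TM brX rho nab a1 x) a2.

(* Induced connection on  wedge^2 E^* (x) F  from connections on E and F:
   (nab_s phi)(e1,e2) = nab_s (phi(e1,e2)) - phi(nab_s e1, e2) - phi(e1, nab_s e2). *)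
Definition conn_wedge2 (S E : Type) (zF : zmodType) (nabE : S -> E -> E)
    (nabF : S -> zF -> zF) (s : S) (phi : E -> E -> zF) : E -> E -> zF :=
  fun e1 e2 => nabF s (phi e1 e2) - phi (nabE s e1) e2 - phi e1 (nabE s e2).

(* Values in V = wedge^2 E^* (x) F are represented as maps E -> E -> F. *)
Definition d_1form (S E : Type) (F : zmodType) (brS : S -> S -> S)
    (nabV : S -> (E -> E -> F) -> (E -> E -> F)) (om : S -> E -> E -> F)
    (s1 s2 : S) : E -> E -> F :=
  fun e1 e2 => nabV s1 (om s2) e1 e2 - nabV s2 (om s1) e1 e2 - om (brS s1 s2) e1 e2.

(* Conditions (M1)-(M9) for the 2-representations
   (nAB, nAC, RA) of A on dB : C -> B   and   (nBA, nBC, RB) of B on dA : C -> A,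
   where A, B are Lie algebroids with brackets brA, brB and anchors rA, rB into
   the vector fields X. *)
Definition matched_pair (X A B C : zmodType)
    (rA : A -> X) (rB : B -> X) (brA : A -> A -> A) (brB : B -> B -> B)
    (brX : X -> X -> X)
    (dA : C -> A) (dB : C -> B)
    (nAB : A -> B -> B) (nAC : A -> C -> C) (RA : A -> A -> B -> C)
    (nBA : B -> A -> A) (nBC : B -> C -> C) (RB : B -> B -> A -> C) : Prop :=
  ( (forall c, rA (dA c) = rB (dB c)) /\
      (forall c1 c2, nAC (dA c1) c2 - nBC (dB c2) c1
                              = - nAC (dA c2) c1 + nBC (dB c1) c2) /\
      (forall a c, brA a (dA c) = dA (nAC a c) - nBA (dB c) a) /\
      (forall b c, brB b (dB c) = dB (nBC b c) - nAB (dA c) b) /\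
      (forall a b, brX (rA a) (rB b) = rB (nAB a b) - rA (nBA b a)) /\
      (forall a b c, nBC b (nAC a c) - nAC a (nBC b c)
                              - nAC (nBA b a) c + nBC (nAB a b) c
                              = RB b (dB c) a - RA a (dA c) b) /\
      (forall a1 a2 b, dA (RA a1 a2 b) =
                  - nBA b (brA a1 a2) + brA (nBA b a1) a2 + brA a1 (nBA b a2)
                  + nBA (nAB a2 b) a1 - nBA (nAB a1 b) a2) /\
      (forall b1 b2 a, dB (RB b1 b2 a) =
                  - nAB a (brB b1 b2) + brB (nAB a b1) b2 + brB b1 (nAB a b2)
                  + nAB (nBA b2 a) b1 - nAB (nBA b1 a) b2)  /\
      (forall a1 a2 b1 b2,
                  d_1form brA (conn_wedge2 nAB nAC) (fun a b1 b2 => RB b1 b2 a) a1 a2 b1 b2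
                = d_1form brB (conn_wedge2 nBA nBC) (fun b a1 a2 => RA a1 a2 b) b1 b2 a1 a2)).

(* Main.v *)
Require Import Defs.
From HB Require Import structures.
From mathcomp Require Import all_boot all_order all_algebra.
Import GRing.Theory.
Local Open Scope ring_scope.

Inductive zt := ZAt of nat | Z0 | ZAdd of zt & zt | ZOpp of zt.

Fixpoint zev {V : zmodType} (env : seq V) (t : zt) : V :=
  match t with
  | ZAt n => nth 0 env n
  | Z0 => 0
  | ZAdd a b => zev env a + zev env b
  | ZOpp a => - zev env a
  end.

Fixpoint zco (t : zt) (i : nat) : int :=
  match t with
  | ZAt n => (n == i)%:Z
  | Z0 => 0
  | ZAdd a b => zco a i + zco b i
  | ZOpp a => - zco a i
  end.

Lemma zev_sum (V : zmodType) (env : seq V) t :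
  zev env t = \sum_(i < size env) (nth 0 env i) *~ zco t i.
Proof.
elim: t => [n||a IHa b IHb|a IHa] /=.
- case: (ltnP n (size env)) => hn.
  + rewrite (bigD1 (Ordinal hn)) //= eqxx big1 ?addr0 //.
    by move=> i /eqP hi; rewrite eq_sym; case: eqP => // e; case: hi; apply: val_inj.
  + rewrite nth_default // big1 // => i _.
    by case: eqP => // e; move: (ltn_ord i); rewrite -e ltnNge hn.
- by rewrite big1 // => i _; rewrite mulr0z.
- by rewrite IHa IHb -big_split /=; apply: eq_bigr => i _; rewrite mulrzDr.
- by rewrite IHa -sumrN; apply: eq_bigr => i _; rewrite mulrNz.
Qed.

Lemma zsound (V : zmodType) (env : seq V) t1 t2 :
  all (fun i => zco t1 i == zco t2 i) (iota 0 (size env)) ->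
  zev env t1 = zev env t2.
Proof.
move/allP=> h; rewrite !zev_sum; apply: eq_bigr => i _.
by rewrite (eqP (h i _)) // mem_iota /=.
Qed.

Ltac zlookup x env :=
  lazymatch env with
  | (x :: _) => constr:(0%nat)
  | (_ :: ?tl) => let n := zlookup x tl in constr:(S n)
  end.

Ltac zcollect t env :=
  lazymatch t with
  | (?a + ?b)%R => let e := zcollect a env in zcollect b e
  | (- ?a)%R => zcollect a env
  | 0%R => env
  | _ => match constr:(tt) with
         | _ => let _ := zlookup t env in env
         | _ => constr:(t :: env)
         end
  end.

Ltac zreify t env :=
  lazymatch t with
  | (?a + ?b)%R => let x := zreify a env in let y := zreify b env in constr:(ZAdd x y)
  | (- ?a)%R => let x := zreify a env in constr:(ZOpp x)
  | 0%R => constr:(Z0)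
  | _ => let n := zlookup t env in constr:(ZAt n)
  end.

Ltac zmod_eq :=
  lazymatch goal with
  | |- ?l = ?r =>
    let T := type of l in
    let e0 := zcollect l (@nil T) in
    let e := zcollect r e0 in
    let tl := zreify l e in
    let tr := zreify r e in
    change (zev e tl = zev e tr); apply: zsound; vm_compute; reflexivity
  end.


Set Implicit Arguments.
Unset Strict Implicit.

Lemma addf_opp (V W : zmodType) (f : V -> W) :
  (forall x y, f (x + y) = f x + f y) -> forall x, f (- x) = - f x.
Proof.
move=> hD x.
have f0 : f 0 = 0.
  have := hD 0 0; rewrite addr0 => h.
  by apply: (@addrI _ (f 0)); rewrite addr0 -h.
by apply/eqP; rewrite -subr_eq0 opprK -hD addNr f0.
Qed.

Lemma br_anti (V : zmodType) (br : V -> V -> V) :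
  lie_bracket br -> forall x y, br y x = - br x y.
Proof.
move=> [hl [hr [hxx _]]] x y.
have := hxx (x + y); rewrite hl !hr !hxx add0r addr0 => h.
by apply/eqP; rewrite -subr_eq0 opprK addrC h.
Qed.

Lemma br_oppr (V : zmodType) (br : V -> V -> V) :
  lie_bracket br -> forall x y, br x (- y) = - br x y.
Proof. by move=> [_ [hr _]] x; apply: addf_opp. Qed.

Lemma br_oppl (V : zmodType) (br : V -> V -> V) :
  lie_bracket br -> forall x y, br (- x) y = - br x y.
Proof. by move=> [hl _] x y; apply: (@addf_opp _ _ (fun z => br z y)) => u v; apply: hl. Qed.

Lemma br_jac (V : zmodType) (br : V -> V -> V) :
  lie_bracket br -> forall p x y, br (br p x) y = br p (br x y) - br x (br p y).
Proof.
move=> hb p x y; have [_ [_ [_ hJ]]] := hb.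
have := hJ p x y; rewrite (br_anti hb (br p x) y) (br_anti hb p y) (br_oppr hb) => h.
apply/eqP; rewrite -subr_eq0 -oppr_eq0; apply/eqP; rewrite -h; zmod_eq.
Qed.
Theorem mainTheorem3 (R : comPzRingType) (X : lmodType R) (brX : X -> X -> X)
    (act : X -> R -> R) (LA : lmodType R) (brA : LA -> LA -> LA)
    (rho : LA -> X) (nab : X -> LA -> LA) :
  tangent_algebroid brX act ->
  lie_algebroid brX act brA rho ->
  linear_connection act nab ->
  matched_pair (X := X) (A := LA) (B := X) (C := LA)
    rho id brA brX brX
    id rho
    (bas_TM brX rho nab) (bas_A brA rho nab) (Rbas brX brA rho nab)
    nab nab (curv brX nab).
Proof.
move=> hT hL hC.
have [hbX [_ [_ [_ [_ [_ _]]]]]] := hT.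
have [hbA [rhoD [_ [rhobr _]]]] := hL.
have [nabDl [_ [nabDr _]]] := hC.
have [bXDl [bXDr _]] := hbX.
have [bADl [bADr _]] := hbA.
have bXNl := br_oppl hbX; have bXNr := br_oppr hbX.
have bANl := br_oppl hbA; have bANr := br_oppr hbA.
have rhoN := addf_opp rhoD.
have nabNl : forall x a, nab (- x) a = - nab x a.
  by move=> x a; apply: (@addf_opp _ _ (fun u => nab u a)) => u v; apply: nabDl.
have nabNr : forall x a, nab x (- a) = - nab x a.
  by move=> x; apply: addf_opp.
have aX := br_anti hbX; have aA := br_anti hbA; have jX := br_jac hbX.
rewrite /matched_pair /d_1form /conn_wedge2 /curv /Rbas /bas_TM /bas_A /=.
split; [|split; [|split; [|split; [|split; [|split; [|split; [|split]]]]]]].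
- by [].
- move=> c1 c2; rewrite (aA c2 c1); zmod_eq.
- move=> a c; zmod_eq.
- move=> b c; rewrite (aX (rho c) b); zmod_eq.
- move=> a b; zmod_eq.
- move=> a b c; rewrite (aX (rho c) b).
  rewrite !(nabDl, nabNl, nabDr, nabNr, bXDl, bXDr, bXNl, bXNr, bADl, bADr, bANl, bANr, rhoD, rhoN, rhobr).
  zmod_eq.
- move=> a1 a2 b; by [].
- move=> b1 b2 a.
  rewrite !(nabDl, nabNl, nabDr, nabNr, bXDl, bXDr, bXNl, bXNr, bADl, bADr, bANl, bANr, rhoD, rhoN, rhobr).
  rewrite (jX (rho a) b1 b2) (aX (rho (nab b2 a)) b1).
  zmod_eq.
- move=> a1 a2 b1 b2.
  rewrite !(nabDl, nabNl, nabDr, nabNr, bXDl, bXDr, bXNl, bXNr, bADl, bADr, bANl, bANr, rhoD, rhoN, rhobr).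
  rewrite (aA a2 (nab (brX b1 b2) a1)) (aA a2 (nab b1 (nab b2 a1))) (aA a2 (nab b2 (nab b1 a1))).
  rewrite (jX (rho a1) b1 b2) (jX (rho a2) b1 b2).
  rewrite (aX (rho (nab b2 a1)) b1) (aX (rho (nab b2 a2)) b1).
  rewrite !(nabDl, nabNl, nabDr, nabNr, bXDl, bXDr, bXNl, bXNr, bADl, bADr, bANl, bANr, rhoD, rhoN, rhobr).
  zmod_eq.
Qed.
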